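(* Let $p\in(1,\infty)$, let $X_1,X_2$ be Banach spaces, $X=X_1\oplus_p X_2$, and $k\in\mathbb{N}$. For every $\varepsilon>0$ and every Lipschitz map $h=(f,g):([\mathbb{N}]^k,d_{\mathbb{H}})\to X$ (with $f:[\mathbb{N}]^k\to X_1$, $g:[\mathbb{N}]^k\to X_2$), there exists $\mathbb{M}\in[\mathbb{N}]^\omega$ such that for every $1\le j\le k$, $$\operatorname{Lip}_j(f_{|[\mathbb{M}]^k})^p+\operatorname{Lip}_j(g_{|[\mathbb{M}]^k})^p\le\operatorname{Lip}_j(h)^p+\varepsilon.$$
   Context: $X_1\oplus_p X_2$ is $X_1\times X_2$ with norm $\|(x_1,x_2)\|=(\|x_1\|^p+\|x_2\|^p)^{1/p}$. For $\mathbb{M}\subset\mathbb{N}$ infinite, $[\mathbb{M}]^k=\{(n_1,\dots,n_k)\in\mathbb{M}^k:n_1<\cdots<n_k\}$ with Hamming distance $d_{\mathbb{H}}(\overline{n},\overline{m})=|\{j:n_j\ne m_j\}|$; $[\mathbb{N}]^\omega$ is the set of infinite subsets of $\mathbb{N}$. $H_j(\mathbb{M})=\{(\overline{n},\overline{m})\in[\mathbb{M}]^k\times[\mathbb{M}]^k: n_i=m_i\ \forall i\ne j,\ n_j<m_j\}$. For $F$ defined on $[\mathbb{M}]^k$ with values in a normed space, $\operatorname{Lip}_j(F)=\sup_{(\overline{n},\overline{m})\in H_j(\mathbb{M})}\|F(\overline{n})-F(\overline{m})\|$; in particular $\operatorname{Lip}_j(h)$ is the supremum over $H_j(\mathbb{N})$.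 *)

(* Defs.v *)
From HB Require Import structures.
From mathcomp Require Import all_boot all_order all_algebra.
From mathcomp Require Import all_classical all_reals all_analysis.
Set Implicit Arguments. Unset Strict Implicit. Unset Printing Implicit Defensive.
Import Order.TTheory GRing.Theory Num.Theory.
Import numFieldNormedType.Exports.
Local Open Scope classical_set_scope.
Local Open Scope ring_scope.

(* [M]^k : strictly increasing k-tuples with entries in M *)
Definition incr_in (M : set nat) (k : nat) (n : k.-tuple nat) : Prop :=
  sorted ltn n /\ (forall i : 'I_k, M (tnth n i)).

Definition dHam (k : nat) (n m : k.-tuple nat) : nat :=
  #|[set i : 'I_k | tnth n i != tnth m i]|.

(* H_j(M) (j is 0-based: j : 'I_k stands for the paper's j+1) *)
Definition Hj (M : set nat) (k : nat) (j : 'I_k)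
  : set (k.-tuple nat * k.-tuple nat) :=
  [set nm | incr_in M nm.1 /\ incr_in M nm.2 /\
            (forall i : 'I_k, i != j -> tnth nm.1 i = tnth nm.2 i) /\
            (tnth nm.1 j < tnth nm.2 j)%N].

(* Lip_j of a map given through its distance function d(F n, F m) *)
Definition LipjD {R : realType} (M : set nat) (k : nat) (j : 'I_k)
  (d : k.-tuple nat -> k.-tuple nat -> R) : R :=
  sup [set d nm.1 nm.2 | nm in Hj M j].

Definition Lipj {R : realType} {V : normedModType R} (M : set nat) (k : nat)
  (j : 'I_k) (F : k.-tuple nat -> V) : R :=
  LipjD M j (fun n m => `|F n - F m|).

(* the norm of X1 (+)_p X2 : ||(x1,x2)|| = (||x1||^p + ||x2||^p)^(1/p) *)
Definition psum_norm {R : realType} (p a b : R) : R :=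
  (a `^ p + b `^ p) `^ p^-1.

Definition hdist {R : realType} {X1 X2 : normedModType R} (p : R) (k : nat)
  (f : k.-tuple nat -> X1) (g : k.-tuple nat -> X2) (n m : k.-tuple nat) : R :=
  psum_norm p `|f n - f m| `|g n - g m|.

(* Main.v *)
Require Import Defs.
From HB Require Import structures.
From mathcomp Require Import all_boot all_order all_algebra.
From mathcomp Require Import all_classical all_reals all_analysis.
From mathcomp Require Import lra.
Import Order.TTheory GRing.Theory Num.Theory.
Import numFieldNormedType.Exports.
Local Open Scope classical_set_scope.


Definition unb (A : set nat) := forall n, exists m, (n <= m)%N /\ A m.
Definition allin (A : set nat) (s : seq nat) :=
  forall i, (i < size s)%N -> A (nth 0%N s i).
Definition homog r (c : seq nat -> nat) (B : set nat) col :=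
  forall s, size s = r -> sorted ltn s -> allin B s -> c s = col.

Lemma pigeon C : forall (c : nat -> nat) A, unb A -> (forall x, A x -> c x < C)%N ->
  exists col, (col < C)%N /\ unb (fun x => A x /\ c x = col).
Proof.
elim: C => [|C IH] c A hA hc.
  by case: (hA 0%N) => m [_ /hc].
case: (pselect (unb (fun x => A x /\ c x = C))) => [h|h].
  by exists C; split.
move: h; rewrite /unb => /existsNP [n hn0].
have hn : forall m, ~ ((n <= m)%N /\ A m /\ c m = C) by move=> m H; apply: hn0; exists m.
have hA' : unb (fun x => A x /\ (n <= x)%N).
  move=> m; case: (hA (maxn n m)) => y [hy Ay].
  exists y; split; [exact: leq_trans (leq_maxr _ _) hy|split => //].
  exact: leq_trans (leq_maxl _ _) hy.
have hc' : forall x, A x /\ (n <= x)%N -> (c x < C)%N.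
  move=> x [Ax nx]; have := hc x Ax; rewrite ltnS leq_eqVlt => /orP[/eqP e|//].
  by exfalso; apply: (hn x); split; last split.
case: (IH c _ hA' hc') => col [colC hcol].
exists col; split; first exact: ltnW.
move=> m; case: (hcol m) => y [my [[Ay _] cy]]; by exists y.
Qed.

Lemma ramsey r : forall C c A, unb A -> (forall s, c s < C)%N ->
  exists B col, (col < C)%N /\ (forall x, B x -> A x) /\ unb B /\ homog r c B col.
Proof.
elim: r => [|r IH] C c A hA hc.
  exists A, (c [::]); split => //; split => //; split => //.
  by move=> [|x s] //.
pose S := {A' : set nat | unb A'}.
have step : forall X : S, exists t : nat * nat * S,
   sval X t.1.1 /\ (forall x, sval t.2 x -> sval X x /\ (t.1.1 < x)%N)
   /\ (t.1.2 < C)%N /\ homog r (fun s => c (t.1.1 :: s)) (sval t.2) t.1.2.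
  move=> [A' hA'] /=.
  case: (hA' 0%N) => a [_ Aa].
  have hA'' : unb (fun x => A' x /\ (a < x)%N).
    move=> m; case: (hA' (maxn a.+1 m)) => y [hy Ay].
    exists y; split; [exact: leq_trans (leq_maxr _ _) hy|split => //].
    exact: leq_trans (leq_maxl _ _) hy.
  case: (IH C (fun s => c (a :: s)) _ hA'' (fun s => hc _)) => B [col [colC [BA [uB hB]]]].
  exists (a, col, exist _ B uB) => /=; split => //; split => //.
case: (choice step) => F hF.
pose X0 : S := exist _ A hA.
pose sq := fun i => iter i (fun X => (F X).2) X0.
pose a := fun i => (F (sq i)).1.1.
pose cl := fun i => (F (sq i)).1.2.
have sqS : forall i, sq i.+1 = (F (sq i)).2 by [].
have F1 : forall i, sval (sq i) (a i) by move=> i; case: (hF (sq i)).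
have F1' : forall i x, sval (sq i.+1) x -> sval (sq i) x /\ (a i < x)%N.
  by move=> i x; rewrite sqS; case: (hF (sq i)) => _ [+ _]; apply.
have F2 : forall i j, (i <= j)%N -> forall x, sval (sq j) x -> sval (sq i) x.
  move=> i j /subnK <-; elim: (j - i)%N => [//|d IHd] x.
  by rewrite addSn => /F1' [/IHd].
have F3 : forall i j, (i < j)%N -> (a i < a j)%N.
  by move=> i j ij; case: (F1' i (a j) (F2 _ _ ij _ (F1 j))).
have F3' : forall i j, (a i < a j)%N -> (i < j)%N.
  move=> i j; rewrite ltnNge; apply: contraNT; rewrite -leqNgt leq_eqVlt.
  by case/orP => [/eqP -> //|/F3 /ltnW].
have F4 : forall i, (i <= a i)%N.
  elim=> [//|i IHi]; exact: leq_ltn_trans IHi (F3 _ _ (ltnSn i)).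
have F5 : forall i, (cl i < C)%N /\ homog r (fun s => c (a i :: s)) (sval (sq i.+1)) (cl i).
  by move=> i; rewrite sqS; case: (hF (sq i)) => _ [_ [? ?]].
case: (@pigeon C cl setT) => [n|x _|col [colC hcol]].
- by exists n.
- by case: (F5 x).
exists (fun x => exists i, cl i = col /\ x = a i), col; split => //; split.
  by move=> x [i [_ ->]]; apply: (F2 0%N i) => //; apply: F1.
split.
  move=> n; case: (hcol n) => i [ni [_ ci]]; exists (a i); split.
    exact: leq_trans ni (F4 i).
  by exists i.
move=> [|x s] //= [sz] srt hB.
have [i [ci xi]] : exists i, cl i = col /\ x = a i by exact: (hB 0%N).
rewrite xi -ci; case: (F5 i) => _ hi; apply: hi => //.
  exact: path_sorted srt.
move=> l ls.
have [j [_ yj]] := hB l.+1 ls.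
have xy : (x < nth 0%N s l)%N.
  have := sorted_ltn_nth ltn_trans 0%N (s := x :: s) srt.
  move=> /(_ 0%N l.+1); apply => //=; rewrite inE /= ltnS // ltnW.
rewrite /= in yj; rewrite yj; apply: (F2 i.+1 j); last exact: F1.
by apply: F3'; rewrite -yj -xi.
Qed.

Lemma unb_inf A : unb A -> infinite_set A.
Proof.
move=> hA.
case: (choice hA) => g hg.
pose phi := fun n => iter n (fun x => g x.+1) (g 0%N).
have phiS : forall n, (phi n < phi n.+1)%N by move=> n; case: (hg (phi n).+1).
have mono : forall i j, (i < j)%N -> (phi i < phi j)%N.
  move=> i j /subnK <-; elim: (j - i.+1)%N => [|d IHd]; first by rewrite add0n.
  by rewrite addSn; apply: ltn_trans IHd (phiS _).
have inj : injective phi.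
  move=> i j e; case: (ltngtP i j) => // /mono; by rewrite e ltnn.
move=> fA.
have : finite_set (phi @^-1` A).
  by apply: finite_preimage => //; move=> x y _ _; apply: inj.
have -> : phi @^-1` A = setT.
  apply/seteqP; split => // n _ /=; case: n => [|n] /=; first by case: (hg 0%N).
  by case: (hg (phi n).+1).
exact: infinite_nat.
Qed.


Definition ntup k (j : nat) (s : seq nat) : k.-tuple nat :=
  [tuple (if (i <= j)%N then nth 0%N s i else nth 0%N s i.+1) | i < k].
Definition mtup k (j : nat) (s : seq nat) : k.-tuple nat :=
  [tuple (if (i < j)%N then nth 0%N s i else nth 0%N s i.+1) | i < k].
Definition mrg k (j : nat) (n m : k.-tuple nat) : seq nat :=
  mkseq (fun i => if (i <= j)%N then nth 0%N n i else nth 0%N m i.-1) k.+1.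

Arguments mrg {k}.

Lemma mrg_props M k (j : 'I_k) (n m : k.-tuple nat) : Hj M j (n, m) ->
  [/\ size (mrg j n m) = k.+1, sorted ltn (mrg j n m), allin M (mrg j n m),
      ntup k j (mrg j n m) = n & mtup k j (mrg j n m) = m].
Proof.
move=> [[sn Mn] [[sm Mm] [eq lt]]].
have Mn' : forall i, (i < k)%N -> M (nth 0%N n i).
  by move=> i ik; rewrite -(tnth_nth 0%N n (Ordinal ik)); apply: Mn.
have Mm' : forall i, (i < k)%N -> M (nth 0%N m i).
  by move=> i ik; rewrite -(tnth_nth 0%N m (Ordinal ik)); apply: Mm.
have eq' : forall i, (i < k)%N -> i != j -> nth 0%N n i = nth 0%N m i.
  move=> i ik ij; rewrite -(tnth_nth 0%N n (Ordinal ik)) -(tnth_nth 0%N m (Ordinal ik)).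
  by apply: eq.
have lt' : (nth 0%N n j < nth 0%N m j)%N by rewrite -!tnth_nth.
have sn' : forall i, (i.+1 < k)%N -> (nth 0%N n i < nth 0%N n i.+1)%N.
  by move=> i ik; move/(sortedP 0%N): sn; apply; rewrite size_tuple.
have sm' : forall i, (i.+1 < k)%N -> (nth 0%N m i < nth 0%N m i.+1)%N.
  by move=> i ik; move/(sortedP 0%N): sm; apply; rewrite size_tuple.
have jk := ltn_ord j.
rewrite /mrg.
split.
- by rewrite size_mkseq.
- apply/(sortedP 0%N) => i; rewrite size_mkseq ltnS => ik.
  rewrite !nth_mkseq //; last exact: ltnW.
  case: (ltngtP i j) => [ij|ji|ij].
  + apply: sn'; exact: leq_ltn_trans ij jk.
  + case: i ji ik => // i ji ik /=; exact: sm'.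
  + by rewrite ij.
- move=> i; rewrite size_mkseq ltnS => ik; rewrite nth_mkseq // ?ltnS //.
  case: ifP => ij; first by apply: Mn'; exact: leq_ltn_trans ij jk.
  apply: Mm'; case: i ik ij => // i ik _ /=.
- apply: eq_from_tnth => i; rewrite tnth_mktuple (tnth_nth 0%N n).
  have ik := ltn_ord i.
  case: ifP => ij.
    rewrite nth_mkseq ?ij //; exact: ltnW.
  rewrite nth_mkseq ?ltnS //.
  move/negbT: ij; rewrite -ltnNge => ij.
  by rewrite ltnNge (ltnW ij) /= eq' // gtn_eqF.
- apply: eq_from_tnth => i; rewrite tnth_mktuple (tnth_nth 0%N m).
  have ik := ltn_ord i.
  case: ifP => ij.
    rewrite nth_mkseq ?(ltnW ij) ?ltnS; last exact: ltnW.
    by rewrite eq' // ltn_eqF.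
  rewrite nth_mkseq ?ltnS //.
  by rewrite ij.
Qed.

Local Open Scope ring_scope.


Lemma powpK (R : realType) (p x : R) : p != 0 -> 0 <= x -> (x `^ p) `^ p^-1 = x.
Proof. by move=> hp hx; rewrite -powRrM mulfV // powRr1. Qed.
Lemma powKp (R : realType) (p x : R) : p != 0 -> 0 <= x -> (x `^ p^-1) `^ p = x.
Proof. by move=> hp hx; rewrite -powRrM mulVf // powRr1. Qed.

Arguments powpK {R p x}.
Arguments powKp {R p x}.

Lemma key (R : realType) (T : Type) (P : set T) (a b : T -> R) (p H d : R) (cf cg : nat) :
 1 < p -> 0 < d -> (forall t, 0 <= a t) -> (forall t, 0 <= b t) ->
 (forall t, P t -> psum_norm p (a t) (b t) <= H) ->
 (forall t, P t -> cf%:R * d <= a t `^ p < cf.+1%:R * d) ->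
 (forall t, P t -> cg%:R * d <= b t `^ p < cg.+1%:R * d) ->
 sup [set a t | t in P] `^ p + sup [set b t | t in P] `^ p <= H `^ p + d + d.
Proof.
move=> p1 d0 a0 b0 hH ha hb.
have p0 : p != 0 by apply: lt0r_neq0; apply: lt_trans p1.
have pi0 : 0 <= p^-1 by rewrite invr_ge0; apply: ltW; apply: lt_trans p1.
have pp0 : 0 <= p by apply: ltW; apply: lt_trans p1.
case: (pselect (exists t, P t)) => [[t0 Pt0]|hP]; last first.
  have -> : P = set0 by apply/seteqP; split => // t Pt; apply: hP; exists t.
  rewrite !image_set0 sup0 powR0 // add0r -addrA.
  by apply: addr_ge0; [exact: powR_ge0|apply: ltW; apply: addr_gt0].
have upper : forall (c : T -> R) (n : nat), (forall t, 0 <= c t) ->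
    (forall t, P t -> c t `^ p < n%:R * d) ->
    sup [set c t | t in P] `^ p <= n%:R * d.
  move=> c n c0 hc.
  have ub : ubound [set c t | t in P] ((n%:R * d) `^ p^-1).
    move=> _ [t Pt <-]; rewrite -(powpK p0 (c0 t)).
    apply: ge0_ler_powR => //; rewrite ?nnegrE ?powR_ge0 //.
      by apply: le_trans (ltW (hc t Pt)); exact: powR_ge0.
    exact: ltW (hc t Pt).
  have s0 : 0 <= sup [set c t | t in P].
    apply: le_trans (c0 t0) _; apply: ub_le_sup; first by exists ((n%:R * d) `^ p^-1).
    by exists t0.
  have nd0 : 0 <= n%:R * d by apply: mulr_ge0 => //; apply: ltW.
  rewrite -(powKp p0 nd0); apply: ge0_ler_powR => //; rewrite ?nnegrE ?powR_ge0 //.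
  by apply: ge_sup => //; exists (c t0), t0.
have uA := upper a cf.+1 a0 (fun t Pt => proj2 (andP (ha t Pt))).
have uB := upper b cg.+1 b0 (fun t Pt => proj2 (andP (hb t Pt))).
have hs0 : 0 <= psum_norm p (a t0) (b t0) by exact: powR_ge0.
have lowH : (a t0 `^ p + b t0 `^ p) <= H `^ p.
  rewrite -(powKp p0 (addr_ge0 (powR_ge0 _ _) (powR_ge0 _ _))).
  apply: ge0_ler_powR => //; rewrite ?nnegrE //=; last exact: hH.
  exact: le_trans (hH t0 Pt0).
have la := proj1 (andP (ha t0 Pt0)).
have lb := proj1 (andP (hb t0 Pt0)).
apply: le_trans (lerD uA uB) _.
rewrite -addn1 -(addn1 cg) !natrD !mulrDl !mul1r.
have : cf%:R * d + cg%:R * d <= H `^ p by apply: le_trans lowH; exact: lerD.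
lra.
Qed.

Lemma homog_sub r c (B B' : set nat) col : (forall x, B' x -> B x) ->
  homog r c B col -> homog r c B' col.
Proof. by move=> sub h s sz srt hs; apply: h => // i /hs; apply: sub. Qed.

Lemma multi r N (cs : nat -> seq nat -> nat) C A : unb A ->
  (forall i s, (cs i s < C)%N) ->
  exists B, (forall x, B x -> A x) /\ unb B /\
    forall i, (i < N)%N -> exists col, homog r (cs i) B col.
Proof.
move=> hA hc; elim: N => [|N [B [BA [uB hB]]]].
  by exists A; split => //; split.
case: (@ramsey r C (cs N) B uB (hc N)) => B' [col [_ [B'B [uB' hB']]]].
exists B'; split; first by move=> x /B'B /BA.
split => // i; rewrite ltnS leq_eqVlt => /orP[/eqP ->|iN].
  by exists col.
case: (hB i iN) => c hc'; exists c; exact: homog_sub B'B hc'.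
Qed.

Lemma le_psum (R : realType) (p a b : R) : 0 < p -> 0 <= a -> 0 <= b ->
  a <= psum_norm p a b /\ b <= psum_norm p a b.
Proof.
move=> p0 a0 b0.
have pn : p != 0 by apply: lt0r_neq0.
have pi0 : 0 <= p^-1 by rewrite invr_ge0 ltW.
have s0 : 0 <= a `^ p + b `^ p by exact: addr_ge0 (powR_ge0 _ _) (powR_ge0 _ _).
split.
  rewrite -{1}(powpK pn a0); apply: ge0_ler_powR => //; rewrite ?nnegrE //.
  - exact: powR_ge0.
  - by rewrite lerDl powR_ge0.
rewrite -{1}(powpK pn b0); apply: ge0_ler_powR => //; rewrite ?nnegrE //.
- exact: powR_ge0.
- by rewrite lerDr powR_ge0.
Qed.

Lemma colprop (R : realType) (V : normedModType R) k (j : 'I_k)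
  (F : k.-tuple nat -> V) (p d K : R) Cb B col :
  0 < p -> 0 < d -> Cb = Num.truncn (K `^ p / d) ->
  (forall t, Hj B j t -> `|F t.1 - F t.2| <= K) ->
  homog k.+1 (fun s => minn (Num.truncn (`|F (ntup k j s) - F (mtup k j s)| `^ p / d)) Cb) B col ->
  forall t, Hj B j t -> col%:R * d <= `|F t.1 - F t.2| `^ p < col.+1%:R * d.
Proof.
move=> p0 d0 eCb hK hh [n m] ht.
have [sz srt al en em] := @mrg_props B k j n m ht.
have := hh _ sz srt al; rewrite en em /= => hcol.
have v0 : 0 <= `|F n - F m| `^ p / d by rewrite divr_ge0 ?powR_ge0 // ltW.
have le : leq (Num.truncn (`|F n - F m| `^ p / d)) Cb.
  rewrite eCb; apply: le_truncn; apply: ler_wpM2r; first by rewrite invr_ge0 ltW.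
  apply: ge0_ler_powR; rewrite ?nnegrE //; first exact: ltW.
    by apply: le_trans (hK _ ht).
  exact: hK ht.
move/minn_idPl: le; rewrite hcol => ec.
have := truncn_itv v0; rewrite -ec => /andP[h1 h2].
by rewrite -ler_pdivlMr // -ltr_pdivrMr // h1 h2.
Qed.

Theorem mainTheorem2 (R : realType) (p : R) (X1 X2 : completeNormedModType R)
  (k : nat) (f : k.-tuple nat -> X1) (g : k.-tuple nat -> X2) :
  1 < p ->
  (* h = (f, g) is Lipschitz from ([N]^k, d_H) to X1 (+)_p X2 *)
  (exists L : R, forall n m : k.-tuple nat, incr_in setT n -> incr_in setT m ->
     hdist p f g n m <= L * (dHam n m)%:R) ->
  forall eps : R, 0 < eps ->
  exists M : set nat, infinite_set M /\
    forall j : 'I_k,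
      Lipj M j f `^ p + Lipj M j g `^ p
        <= LipjD setT j (hdist p f g) `^ p + eps.
Proof.
move=> p1 [L hL] eps heps.
have p0 : 0 < p by apply: lt_trans p1.
pose d := eps / 2.
have d0 : 0 < d by rewrite divr_gt0.
pose K := `|L| * k%:R.
have hK : forall n m, incr_in setT n -> incr_in setT m -> hdist p f g n m <= K.
  move=> n m hn hm; apply: le_trans (hL n m hn hm) _.
  apply: le_trans (ler_wpM2r (ler0n _ _) (ler_norm L)) _.
  apply: ler_wpM2l => //; rewrite ler_nat /dHam.
  by apply: leq_trans (max_card _) _; rewrite card_ord.
pose Cb := Num.truncn (K `^ p / d).
pose colf i s := minn (Num.truncn (`|f (ntup k i s) - f (mtup k i s)| `^ p / d)) Cb.
pose colg i s := minn (Num.truncn (`|g (ntup k i s) - g (mtup k i s)| `^ p / d)) Cb.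
pose cs i s := if (i < k)%N then colf i s else colg (i - k)%N s.
have csb : forall i s, (cs i s < Cb.+1)%N.
  by move=> i s; rewrite /cs; case: ifP => _; rewrite ltnS geq_minr.
have uT : unb setT by move=> n; exists n.
case: (@multi k.+1 (k + k) cs Cb.+1 setT uT csb) => B [_ [uB hB]].
exists B; split; first exact: unb_inf.
move=> j.
have jk := ltn_ord j.
case: (hB j (ltn_addr _ jk)) => cf hf.
have kjk : (k + j < k + k)%N by rewrite ltn_add2l.
case: (hB (k + j)%N kjk) => cg hg.
have hf' : homog k.+1 (colf j) B cf.
  by move=> s sz srt al; rewrite -(hf s sz srt al) /cs jk.
have hg' : homog k.+1 (colg j) B cg.
  by move=> s sz srt al; rewrite -(hg s sz srt al) /cs ltnNge leq_addr /= addKn.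
have HBT : forall t, Hj B j t -> Hj setT j t.
  by move=> [n m] [[sn _] [[sm _] rest]]; split; [|split].
have hH : forall t, Hj B j t -> psum_norm p `|f t.1 - f t.2| `|g t.1 - g t.2| <= LipjD setT j (hdist p f g).
  move=> t ht; apply: ub_le_sup.
    exists K => _ [u [[hu1 _] [[hu2 _] _]] <-]; exact: hK.
  by exists t => //; apply: HBT.
have hKt : forall t, Hj B j t -> psum_norm p `|f t.1 - f t.2| `|g t.1 - g t.2| <= K.
  move=> [n m] [[sn _] [[sm _] _]]; apply: hK; split => //.
have hfK : forall t, Hj B j t -> `|f t.1 - f t.2| <= K.
  move=> t ht; apply: le_trans (hKt t ht).
  by case: (@le_psum R p _ _ p0 (normr_ge0 (f t.1 - f t.2)) (normr_ge0 (g t.1 - g t.2))).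
have hgK : forall t, Hj B j t -> `|g t.1 - g t.2| <= K.
  move=> t ht; apply: le_trans (hKt t ht).
  by case: (@le_psum R p _ _ p0 (normr_ge0 (f t.1 - f t.2)) (normr_ge0 (g t.1 - g t.2))).
have ha := @colprop R _ k j f p d K Cb B cf p0 d0 (erefl Cb) hfK hf'.
have hb := @colprop R _ k j g p d K Cb B cg p0 d0 (erefl Cb) hgK hg'.
have := @key R _ _ _ _ p _ d _ _ p1 d0 (fun t => normr_ge0 _) (fun t => normr_ge0 _) hH ha hb.
have -> : LipjD setT j (hdist p f g) `^ p + d + d = LipjD setT j (hdist p f g) `^ p + eps.
  by rewrite -addrA /d -splitr.
by [].
Qed.
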